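(* Let $q>5$ be a prime power which cannot be written as $2^p$ with $p$ prime. Then, for any generator $w$ of $\mathbb F_q^*$, the group $G(q)$ contains the permutation of $\mathbb F_q^*$ induced by $c\mapsto wc$, which is a $(q-1)$-cycle.
   Context: $\mathbb F_q$ is the field with $q$ elements, $\mathbb F_q^*$ its multiplicative group. $G(q)$ denotes the group of permutations of $\mathbb F_q^*$ generated by all permutations of $\mathbb F_q^*$ which can be represented as $c\mapsto ac^m+bc^n$ with $a,b\in\mathbb F_q^*$ and integers $0<m<n<q$. *)

(* Defs.v *)
From HB Require Import structures.
From mathcomp Require Import all_boot all_order all_algebra all_fingroup all_field.
Set Implicit Arguments. Unset Strict Implicit. Unset Printing Implicit Defensive.
Import GRing.Theory.
Local Open Scope ring_scope.

(* The multiplicative group F^* of a finite field F is modelled by {unit F}. *)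

(* s is a permutation of F^* represented as c |-> a c^m + b c^n with
   a, b nonzero and integers 0 < m < n < q, where q = #|F|
   (n ranges over 'I_#|F|, which encodes n < q). *)
Definition binomial_perm (F : finFieldType) (s : {perm {unit F}}) : bool :=
  [exists a : F, exists b : F, exists m : 'I_#|F|, exists n : 'I_#|F|,
    [&& a != 0, b != 0, (0 < m)%N, (m < n)%N &
        [forall c : {unit F},
           val (s c) == a * (val c) ^+ m + b * (val c) ^+ n]]].

Definition Gq (F : finFieldType) : {set {perm {unit F}}} :=
  <<[set s : {perm {unit F}} | binomial_perm s]>>%g.

(* Main.v *)
Require Import Defs.
From HB Require Import structures.
From mathcomp Require Import all_boot all_order all_algebra all_fingroup all_field.
From mathcomp Require Import all_solvable.
From mathcomp Require Import zify ring.
Set Implicit Arguments. Unset Strict Implicit. Unset Printing Implicit Defensive.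
Import GRing.Theory FinRing.Theory.
Local Open Scope ring_scope.


Section Gen.
Variable F : finFieldType.

Definition P (f : F -> F) :=
  exists2 s : {perm {unit F}}, s \in Gq F & forall c : {unit F}, val (s c) = f (val c).

Lemma unit_neq0 (c : {unit F}) : val c != 0.
Proof. by rewrite -unitfE; case: c. Qed.

Lemma P_id : P id.
Proof. by exists 1%g; [exact: group1 | move=> c; rewrite perm1]. Qed.

Lemma P_comp f g : P f -> P g -> P (g \o f).
Proof.
move=> [sf Hf Ef] [sg Hg Eg]; exists (sf * sg)%g; first exact: groupM.
by move=> c; rewrite permM Eg Ef.
Qed.

Lemma P_ext f g : P f -> (forall x, x != 0 -> f x = g x) -> P g.
Proof.
move=> [s Hs Es] Efg; exists s => // c; rewrite Es Efg //; exact: unit_neq0.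
Qed.

Lemma P_binom (a b : F) (m n : nat) : a != 0 -> b != 0 -> (0 < m)%N -> (m < n)%N ->
  (n < #|F|)%N ->
  (forall x y, x != 0 -> y != 0 -> a * x ^+ m + b * x ^+ n = a * y ^+ m + b * y ^+ n -> x = y) ->
  (forall x, x != 0 -> a * x ^+ m + b * x ^+ n != 0) ->
  P (fun x => a * x ^+ m + b * x ^+ n).
Proof.
move=> a0 b0 m0 mn nq inj nz.
pose h (x : F) := a * x ^+ m + b * x ^+ n.
pose fu (c : {unit F}) : {unit F} := insubd c (h (val c)).
have fuE c : val (fu c) = h (val c).
  by rewrite /fu insubdK // unitfE; apply: nz; apply: unit_neq0.
have fu_inj : injective fu.
  move=> c d /(congr1 val); rewrite !fuE => /inj E; apply: val_inj; apply: E;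
  exact: unit_neq0.
exists (perm fu_inj); last by move=> c; rewrite permE fuE.
apply: mem_gen; rewrite inE; apply/existsP; exists a; apply/existsP; exists b.
have mq : (m < #|F|)%N by apply: ltn_trans nq.
apply/existsP; exists (Ordinal mq); apply/existsP; exists (Ordinal nq).
rewrite a0 b0 m0 mn /=; apply/forallP => c; by rewrite permE fuE.
Qed.

Lemma P_scale_binom (mu a b : F) (m n : nat) : mu != 0 -> a != 0 -> b != 0 -> (0 < m)%N -> (m < n)%N ->
  (n < #|F|)%N ->
  (forall x y, x != 0 -> y != 0 -> a * x ^+ m + b * x ^+ n = a * y ^+ m + b * y ^+ n -> x = y) ->
  (forall x, x != 0 -> a * x ^+ m + b * x ^+ n != 0) ->
  P (fun x => mu * (a * x ^+ m + b * x ^+ n)).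
Proof.
move=> mu0 a0 b0 m0 mn nq inj nz.
apply: (@P_ext (fun x => (mu * a) * x ^+ m + (mu * b) * x ^+ n)); last first.
  by move=> x _; rewrite mulrDr !mulrA.
apply: P_binom => //; try by rewrite mulf_neq0.
- move=> x y x0 y0; rewrite -!mulrA -!mulrDr => /(mulfI mu0); exact: inj.
- by move=> x x0; rewrite -!mulrA -mulrDr mulf_neq0 // nz.
Qed.

End Gen.



Lemma final (F : finFieldType) (w : {unit F}) : <[w]>%g = [set: {unit F}] ->
  P (fun x => val w * x) ->
  exists s : {perm {unit F}},
    [/\ s \in Gq F, (forall c : {unit F}, s c = (w * c)%g) &
        forall c : {unit F}, #|porbit s c| = #|F|.-1].
Proof.
move=> gen [s Hs Es].
have sE : forall c, s c = (w * c)%g by move=> c; apply: val_inj; rewrite Es val_unitM.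
exists s; split => // c.
have sX : forall i d, (s ^+ i)%g d = (w ^+ i * d)%g.
  elim=> [|i IH] d; first by rewrite !expg0 perm1 mul1g.
  by rewrite expgSr permM IH sE expgS mulgA.
transitivity #|[set: {unit F}]|; last exact: card_finField_unit.
apply: eq_card => y; rewrite inE.
apply/porbitP.
have : (y * c^-1)%g \in <[w]>%g by rewrite gen inE.
case/cycleP => i Ei; exists i; rewrite sX -Ei -mulgA mulVg mulg1 //.
Qed.

Lemma order_w (F : finFieldType) (w : {unit F}) : <[w]>%g = [set: {unit F}] ->
  forall i, (val w ^+ i == 1) = (#|F|.-1 %| i)%N.
Proof.
move=> gen i; rewrite -val_unitX -val_unit1 val_eqE -order_dvdn.
by rewrite -(card_finField_unit F) -gen.
Qed.



Lemma invol (F : finFieldType) (W : F) (a b lam : F) (m n : nat) :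
  W != 0 -> a != 0 -> b != 0 -> (0 < m)%N -> (m < n)%N -> (n < #|F|)%N -> lam != 0 ->
  (forall x, a * (a * x ^+ m + b * x ^+ n) ^+ m + b * (a * x ^+ m + b * x ^+ n) ^+ n = lam * x) ->
  P (fun x => W * x).
Proof.
move=> W0 a0 b0 m0 mn nq l0 ff.
set f := fun x : F => a * x ^+ m + b * x ^+ n.
have f0 : f 0 = 0 by rewrite /f !expr0n (gtn_eqF m0) (gtn_eqF (leq_trans m0 (ltnW mn))) !mulr0 addr0.
have finj : forall x y, f x = f y -> x = y.
  move=> x y E; apply: (mulfI l0); rewrite -!ff; exact: (congr1 f E).
have fnz : forall x, x != 0 -> f x != 0.
  move=> x x0; apply/eqP => E; move/eqP: x0; apply; apply: finj; by rewrite E.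
have Pf : P f by apply: P_binom => // x y _ _; exact: finj.
have Pg : P (fun x => (W / lam) * f x).
  apply: P_scale_binom => //; first by rewrite mulf_neq0 // invr_eq0.
  by move=> x y _ _; exact: finj.
apply: (P_ext (P_comp Pf Pg)) => x _ /=.
by rewrite /f ff mulrA divfK.
Qed.



Lemma fermat1 (F : finFieldType) (x : F) : x != 0 -> x ^+ #|F|.-1 = 1.
Proof.
move=> x0; apply: (mulIf x0); rewrite mul1r -exprSr prednK ?expf_card //.
exact: ltn_trans (finNzRing_gt1 F).
Qed.

Lemma caseA (F : finFieldType) (w : {unit F}) : <[w]>%g = [set: {unit F}] ->
  (2%:R : F) != 0 -> (5 < #|F|)%N -> P (fun x => val w * x).
Proof.
move=> gen two0 q5.
set q := #|F|. set W := val w.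
have W0 : W != 0 by apply: unit_neq0.
have ordW := order_w gen.
have Wn1 : forall i, (0 < i)%N -> (i < q.-1)%N -> W ^+ i != 1.
  move=> i i0 iq; rewrite ordW; apply/negP => /dvdn_leq; rewrite i0 => /(_ isT).
  by rewrite leqNgt iq.
have evq : ~~ odd q.-1.
  apply/negP => oq; move/eqP: two0; apply.
  have m10 : (-1 : F) != 0 by rewrite oppr_eq0 oner_eq0.
  have := fermat1 m10.
  rewrite -signr_odd oq expr1 => E.
  by rewrite -[2%N]/(1+1)%N natrD -{1}E addNr.
set h := q.-1./2.
have hq : q.-1 = (h * 2)%N by rewrite muln2 /h -{1}(odd_double_half q.-1) (negbTE evq).
have h0 : (0 < h)%N by rewrite /h; lia.
have hlt : (h < q.-1)%N by lia.
have Wh : W ^+ h = -1.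
  have : (W ^+ h) ^+ 2 == 1 by rewrite -exprM -hq (fermat1 W0).
  by rewrite sqrf_eq1 (negbTE (Wn1 _ h0 hlt)) => /eqP.
have xh : forall x : F, x != 0 -> x ^+ h = 1 \/ x ^+ h = -1.
  move=> x x0; have : (x ^+ h) ^+ 2 == 1 by rewrite -exprM -hq (fermat1 x0).
  by rewrite sqrf_eq1 => /orP [] /eqP; [left|right].
pose a := (W + W ^+ 3) / 2%:R.
pose b := (W - W ^+ 3) / 2%:R.
have W4 : W ^+ 4 != 1 by apply: Wn1 => //; lia.
have W2 : W ^+ 2 != 1 by apply: Wn1 => //; lia.
have a0 : a != 0.
  rewrite /a mulf_neq0 ?invr_eq0 //; apply/eqP => E.
  move/eqP: W4; apply.
  have E2 : W ^+ 2 = -1.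
    apply: (mulfI W0); rewrite mulrN -exprS; apply/eqP; rewrite -addr_eq0.
    by rewrite mulr1 addrC; apply/eqP.
  by rewrite -[4%N]/(2*2)%N exprM E2 sqrrN expr1n.
have b0 : b != 0.
  rewrite /b mulf_neq0 ?invr_eq0 //; apply/eqP => E.
  move/eqP: W2; apply.
  apply: (mulfI W0); rewrite -exprS mulr1; apply/esym/eqP; rewrite -subr_eq0.
  by apply/eqP.
have fE : forall x : F, a * x ^+ 1 + b * x ^+ h.+1 = x * (a + b * x ^+ h).
  by move=> x; rewrite expr1 exprSr; ring.
have apb : a + b = W by rewrite /a /b; field.
have amb : a - b = W ^+ 3 by rewrite /a /b; field.
apply: (@invol F W a b (W ^+ 4) 1 h.+1) => //.
all: try by [rewrite /q in hq h0; lia | rewrite expf_neq0].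
move=> x; rewrite !fE.
have [->|x0] := eqVneq x 0; first by rewrite !mul0r mulr0.
have m13 : (-1 : F) ^+ 3 = -1 by ring.
case: (xh x x0) => E; rewrite E.
- rewrite mulr1 apb exprMn E Wh mul1r mulrN1 amb; ring.
- rewrite mulrN1 amb exprMn E exprAC Wh m13 mulrN1 opprK mulr1 apb; ring.
Qed.



Lemma frob2 (F : comRingType) (two0 : (2%:R : F) = 0) N (x y : F) :
  (x + y) ^+ (2 ^ N) = x ^+ (2 ^ N) + y ^+ (2 ^ N).
Proof.
elim: N => [|N IH]; first by rewrite !expr1.
rewrite expnSr !exprM IH sqrrD -mulr_natr two0 mulr0 addr0.
by [].
Qed.

Lemma caseB (F : finFieldType) (w : {unit F}) : <[w]>%g = [set: {unit F}] ->
  (2%:R : F) = 0 -> forall k, #|F| = (2 ^ k * 2 ^ k)%N -> (2 <= k)%N ->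
  P (fun x => val w * x).
Proof.
move=> gen two0 k qk k2.
set W := val w.
have W0 : W != 0 by apply: unit_neq0.
have ordW := order_w gen.
set Q := (2 ^ k)%N.
have Q4 : (4 <= Q)%N by rewrite /Q -[4%N]/(2 ^ 2)%N leq_exp2l.
have m11 : (-1 : F) = 1 by apply/eqP; rewrite eq_sym -addr_eq0; apply/eqP; exact: two0.
apply: (@invol F W 1 W (1 + W ^+ Q.+1) 1 Q) => //.
- by rewrite oner_eq0.
- by rewrite /Q; lia.
- by rewrite qk /Q; nia.
- apply/eqP => E.
  have : W ^+ Q.+1 == 1 by rewrite -m11 -addr_eq0 addrC E.
  rewrite ordW -/W qk -/Q => /dvdn_leq => /(_ isT); nia.
move=> x; rewrite !mul1r !expr1 frob2 // exprMn -exprM -qk expf_card.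
rewrite -/Q exprS; apply/eqP; rewrite -subr_eq0; apply/eqP.
transitivity (2%:R * (W * x ^+ Q)); [ring | by rewrite two0 mul0r].
Qed.



Lemma sum_pairs (R : nmodType) (h : nat -> R) N :
  \sum_(0 <= m < N.*2) h m = \sum_(0 <= n < N) (h n.*2 + h n.*2.+1).
Proof.
elim: N => [|N IH]; first by rewrite !big_geq.
by rewrite doubleS !big_nat_recr //= IH addrA.
Qed.

Lemma sum_blocks (R : nmodType) (h : nat -> R) r u :
  \sum_(0 <= n < r * u) h n = \sum_(0 <= l < u) \sum_(0 <= i < r) h (r * l + i).
Proof.
elim: u => [|u IH]; first by rewrite muln0 !big_geq.
rewrite big_nat_recr //= -IH mulnS addnC (big_cat_nat _ (leq_addr r (r * u))) //=.
congr (_ + _).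
rewrite -{1}[(r * u)%N]add0n big_addn addKn.
by apply: eq_bigr => i _; rewrite addnC.
Qed.

Section CaseC.
Variable F : finFieldType.
Hypothesis two0 : (2%:R : F) = 0.
Variables k r t u : nat.
Hypothesis qkr : #|F| = (2 ^ (k * r))%N.
Hypothesis k0 : (0 < k)%N.
Hypothesis pr : prime r.
Hypothesis r2 : r != 2%N.
Hypothesis tu : (2 ^ t)%N = (r * u + 1)%N.
Hypothesis t0 : (0 < t)%N.
Hypothesis u0 : (0 < u)%N.

Lemma fixk (y : F) m : y ^+ ((2 ^ (k * r)) ^ m) = y.
Proof.
elim: m => [|m IH]; first by rewrite expr1.
by rewrite expnSr exprM IH -qkr expf_card.
Qed.

Lemma fixb (b : F) : b ^+ (2 ^ k) = b -> forall m, b ^+ (2 ^ (k * m)) = b.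
Proof.
move=> bk; elim=> [|m IH]; first by rewrite muln0 expr1.
by rewrite mulnS expnD exprM bk IH.
Qed.

Definition Lf (b : F) (j : nat) (x : F) := x + b * x ^+ (2 ^ (k * j)).
Fixpoint Phi (s : nat) (b : F) (j : nat) (x : F) : F :=
  if s is s'.+1 then Phi s' (b ^+ 2) j.*2 (Lf b j x) else x.

Lemma Phi_sum s : forall b j x, b ^+ (2 ^ k) = b ->
  Phi s b j x = \sum_(0 <= n < 2 ^ s) b ^+ n * x ^+ (2 ^ (k * (j * n))).
Proof.
elim: s => [|s IH] b j x bk.
  by rewrite expn0 big_nat1 expr0 mul1r muln0 muln0 expr1.
rewrite /= IH; last by rewrite exprAC bk.
rewrite expnS mul2n sum_pairs; apply: eq_bigr => n _.
rewrite /Lf frob2 // [X in _ + X]exprMn (fixb bk) -[(x ^+ (2 ^ (k * j))) ^+ _]exprM -expnD.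
have -> : (k * j + k * (j.*2 * n) = k * (j * (n.*2.+1)))%N by rewrite -!mul2n; ring.
have -> : (k * (j.*2 * n) = k * (j * n.*2))%N by rewrite -!mul2n; ring.
rewrite -exprM -mul2n exprS; ring.
Qed.

Lemma Phi_id b j x : b ^+ (2 ^ k) = b -> (b ^+ r) ^+ u = 1 -> b ^+ r != 1 ->
  Phi t b j x = x.
Proof.
move=> bk bu br.
rewrite Phi_sum // tu addn1 big_nat_recl // !muln0 expn0 expr0 mul1r expr1.
rewrite sum_blocks.
set C := \sum_(0 <= i < r) b ^+ i.+1 * x ^+ (2 ^ (k * (j * i.+1))).
have E : forall l, \sum_(0 <= i < r) b ^+ (r * l + i).+1 * x ^+ (2 ^ (k * (j * (r * l + i).+1)))
     = (b ^+ r) ^+ l * C.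
  move=> l; rewrite /C mulr_sumr; apply: eq_bigr => i _.
  have -> : (2 ^ (k * (j * (r * l + i).+1)) = 2 ^ (k * (j * i.+1)) * (2 ^ (k * r)) ^ (j * l))%N.
    by rewrite -expnM -expnD; congr (2 ^ _)%N; ring.
  by rewrite exprM fixk -addnS exprD -exprM mulrA.
rewrite (eq_bigr _ (fun l _ => E l)) -mulr_suml.
suff -> : \sum_(0 <= l < u) (b ^+ r) ^+ l = 0 by rewrite mul0r addr0.
have := subrX1 (b ^+ r) u; rewrite bu subrr big_mkord => /esym /eqP.
by rewrite mulf_eq0 subr_eq0 (negbTE br) /= => /eqP.
Qed.


Definition Cond (b : F) (j : nat) :=
  [/\ b ^+ (2 ^ k) = b, (b ^+ r) ^+ u = 1, b ^+ r != 1 & ~~ (r %| j)%N].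

Lemma sq_eq1 (g : F) : g ^+ 2 = 1 -> g = 1.
Proof.
move=> g2; have : (g + 1) ^+ 2 = 0.
  by rewrite -[2%N]/(2 ^ 1)%N frob2 // g2 expr1n; exact: two0.
move/eqP; rewrite expf_eq0 /= addr_eq0 => /eqP ->.
by apply/eqP; rewrite eq_sym -addr_eq0; apply/eqP; exact: two0.
Qed.

Lemma Cond2 b j : Cond b j -> Cond (b ^+ 2) j.*2.
Proof.
case=> bk bu br rj; split.
- by rewrite exprAC bk.
- by rewrite -!exprM mulnC !exprM bu expr1n.
- by apply/negP => /eqP; rewrite exprAC => /sq_eq1 /eqP; apply/negP.
- rewrite -mul2n Euclid_dvdM // negb_or rj andbT; apply/negP => /dvdn_leq => /(_ isT).
  have := prime_gt1 pr; move: r2; clear; lia.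
Qed.

Lemma Cond_b0 b j : Cond b j -> b != 0.
Proof.
case=> _ bu _ _; apply/eqP => b0; move: bu; rewrite b0 expr0n (gtn_eqF (prime_gt0 pr)).
by rewrite expr0n (gtn_eqF u0) => /eqP; rewrite eq_sym oner_eq0.
Qed.

Lemma Lf_binom b j x : ~~ (r %| j)%N -> Lf b j x = 1 * x ^+ 1 + b * x ^+ (2 ^ (k * (j %% r))).
Proof.
move=> rj; rewrite /Lf mul1r expr1; congr (_ + _ * _).
have -> : (2 ^ (k * j) = 2 ^ (k * (j %% r)) * (2 ^ (k * r)) ^ (j %/ r))%N.
  by rewrite -expnM -expnD; congr (2 ^ _)%N; rewrite {1}(divn_eq j r); ring.
by rewrite exprM fixk.
Qed.

Lemma Lf_inj b j : Cond b j -> injective (Lf b j).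
Proof.
case=> bk bu br rj x y E.
rewrite -(Phi_id j x bk bu br) -(Phi_id j y bk bu br).
by case: t t0 => // t' _ /=; rewrite E.
Qed.

Lemma Lf0 b j : Lf b j 0 = 0.
Proof. by rewrite /Lf expr0n expn_eq0 mulr0 addr0. Qed.

Lemma Lf_exp j : ~~ (r %| j)%N -> (1 < 2 ^ (k * (j %% r)))%N /\ (2 ^ (k * (j %% r)) < #|F|)%N.
Proof.
move=> rj; have jr : (0 < j %% r)%N by move: rj; rewrite /dvdn lt0n.
have jr2 : (j %% r < r)%N by rewrite ltn_pmod // prime_gt0.
split; first by rewrite -{1}(expn0 2) ltn_exp2l // muln_gt0 k0.
by rewrite qkr ltn_exp2l // ltn_pmul2l.
Qed.

Lemma P_Lf (mu : F) b j : mu != 0 -> Cond b j -> P (fun x => mu * Lf b j x).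
Proof.
move=> mu0 C; have b0 := Cond_b0 C; have [_ _ _ rj] := C.
have [e1 e2] := Lf_exp rj.
apply: (@P_ext _ (fun x => mu * (1 * x ^+ 1 + b * x ^+ (2 ^ (k * (j %% r)))))); last first.
  by move=> x _; rewrite Lf_binom.
apply: P_scale_binom => //; first by rewrite oner_eq0.
- by move=> x y _ _; rewrite -!(Lf_binom b _ rj); exact: Lf_inj.
- move=> x x0; rewrite -(Lf_binom b x rj); apply/eqP => E; move/eqP: x0; apply.
  by apply: (Lf_inj C); rewrite E Lf0.
Qed.

Lemma P_Phi (W : F) : W != 0 -> forall s b j, Cond b j -> P (fun x => W * Phi s.+1 b j x).
Proof.
move=> W0; elim=> [|s IH] b j C; first exact: P_Lf.
apply: (@P_ext _ ((fun x => W * Phi s.+1 (b ^+ 2) j.*2 x) \o Lf b j)) => //.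
apply: P_comp; last exact: IH (Cond2 C).
by apply: (@P_ext _ (fun x => 1 * Lf b j x)) => [|x _]; [apply: P_Lf; rewrite ?oner_eq0 | rewrite mul1r].
Qed.


Lemma P_final (W g : F) : W != 0 -> Cond g 1 -> P (fun x => W * x).
Proof.
move=> W0 C; apply: (P_ext (P_Phi W0 t.-1 C)) => x _.
have [gk gu gr _] := C.
by rewrite prednK // Phi_id.
Qed.

End CaseC.





Lemma dvd_pred_pow Q r : (0 < Q)%N -> (Q.-1 %| (Q ^ r).-1)%N.
Proof.
move=> Q0; have Qr0 : (0 < Q ^ r)%N by rewrite expn_gt0 Q0.
rewrite -!subn1 -eqn_mod_dvd; last by [].
have HQ : (Q %% (Q - 1) = 1 %% (Q - 1))%N.
  by rewrite {1}(_ : Q = Q - 1 + 1)%N ?modnDl // subnK.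
by rewrite -modnXm HQ modnXm exp1n.
Qed.

Lemma caseC (F : finFieldType) (w : {unit F}) : <[w]>%g = [set: {unit F}] ->
  (2%:R : F) = 0 -> forall e, #|F| = (2 ^ e)%N -> odd e -> ~~ prime e -> (3 <= e)%N ->
  P (fun x => val w * x).
Proof.
move=> gen two0 e qe oe npe e3.
set W := val w.
have W0 : W != 0 by apply: unit_neq0.
have ordW := order_w gen.
set r := pdiv e.
have pr : prime r by apply: pdiv_prime; lia.
have re : (r %| e)%N by apply: pdiv_dvd.
set k := (e %/ r)%N.
have ekr : e = (k * r)%N by rewrite /k divnK.
have r2 : r != 2%N.
  apply/eqP => r2; move: oe; rewrite ekr r2 oddM /= andbF //.
have r3 : (3 <= r)%N by have := prime_gt1 pr; move: r2; clear; lia.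
have k1 : (1 < k)%N.
  rewrite ltnNge; apply/negP => k1; move: npe; rewrite ekr.
  have : k = 1%N.
    by move: k1 e3; rewrite ekr; case: (k) => [|[|]] //; rewrite mul0n.
  by move=> ->; rewrite mul1n pr.
have rk : (r <= k)%N.
  by apply: pdiv_min_dvd => //; rewrite ekr dvdn_mulr.
set Q := (2 ^ k)%N.
have Qr : (r.+1 < Q)%N.
  have := ltn_expl k.-1 (isT : (1 < 2)%N).
  have : Q = (2 * 2 ^ k.-1)%N by rewrite /Q -expnS prednK //; lia.
  lia.
have Q0 : (0 < Q)%N by rewrite expn_gt0.
have qQ : #|F| = (Q ^ r)%N by rewrite qe ekr expnM.
have [s sE] : exists s, #|F|.-1 = (s * Q.-1)%N.
  by exists (#|F|.-1 %/ Q.-1)%N; rewrite divnK // qQ dvd_pred_pow.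
have s0 : (0 < s)%N.
  rewrite lt0n; apply/eqP => s0; move: sE; rewrite s0 mul0n qQ -(prednK (prime_gt0 pr)) expnS.
  have := expn_gt0 Q r.-1; rewrite Q0 /=; nia.
set M := (r * Q.-1)%N.
have cop : coprime 2 M.
  rewrite coprime2n /M oddM.
  have : odd r by move: oe; apply: contraLR; rewrite -!dvdn2 => /dvdn_trans; apply.
  move=> ->; rewrite /Q -subn1 oddB ?expn_gt0 // oddX orbF /=.
  by case: (k) k1.
set t := totient M.
have M0 : (0 < M)%N by rewrite /M muln_gt0 prime_gt0 //=; lia.
have t0 : (0 < t)%N by rewrite totient_gt0.
have Mt : (M %| (2 ^ t).-1)%N.
  rewrite -subn1 -eqn_mod_dvd ?expn_gt0 //; apply/eqP.
  by rewrite Euler_exp_totient // coprime_sym.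
have [u tu] : exists u, (2 ^ t)%N = (r * u + 1)%N.
  exists ((2 ^ t).-1 %/ r)%N; rewrite mulnC divnK ?addn1 ?prednK ?expn_gt0 //.
  exact: dvdn_trans (dvdn_mulr _ (dvdnn r)) Mt.
have u0 : (0 < u)%N.
  rewrite lt0n; apply/eqP => u0; move: tu; rewrite u0 muln0.
  have := ltn_expl t (isT : (1 < 2)%N); lia.
have Qt : (Q.-1 %| r * u)%N.
  have -> : (r * u = (2 ^ t).-1)%N by rewrite tu addn1.
  exact: dvdn_trans (dvdn_mull _ (dvdnn _)) Mt.
pose g := W ^+ s.
have k0 : (0 < k)%N by lia.
apply: (@P_final F two0 k r t u _ k0 pr r2 tu t0 u0 W g W0).
- by rewrite qQ /Q expnM.
split.
- rewrite -/Q; apply/eqP; rewrite -subr_eq0.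
  have -> : g ^+ Q - g = g * (g ^+ Q.-1 - 1) by rewrite mulrBr -exprS prednK // mulr1.
  rewrite /g -exprM -sE.
  by have := ordW #|F|.-1; rewrite dvdnn -/W => /eqP ->; rewrite subrr mulr0.
- by apply/eqP; rewrite /g -!exprM ordW sE dvdn_pmul2l.
- rewrite /g -exprM ordW sE dvdn_pmul2l //; apply/negP => /dvdn_leq.
  rewrite prime_gt0 // => /(_ isT); lia.
- by rewrite dvdn1; move: r3; clear; lia.
Qed.



Lemma main_P (F : finFieldType) (w : {unit F}) : <[w]>%g = [set: {unit F}] ->
  (5 < #|F|)%N -> (forall p : nat, prime p -> #|F| <> (2 ^ p)%N) ->
  P (fun x => val w * x).
Proof.
move=> gen q5' np2.
have [two0|two0] := eqVneq (2%:R : F) 0; last exact: caseA.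
have pc : (2 \in [pchar F])%N by apply/andP; split => //; apply/eqP.
have qe : #|F| = (2 ^ logn 2 #|F|)%N := card_pprimeChar pc.
set e := logn 2 #|F| in qe.
have e3 : (3 <= e)%N.
  rewrite leqNgt; apply/negP => e2.
  have : (2 ^ e <= 2 ^ 2)%N by rewrite leq_exp2l //; lia.
  rewrite -qe; lia.
have npe : ~~ prime e by apply/negP => pe; apply: (np2 e pe).
case oe: (odd e).
- exact: (caseC gen two0 qe oe npe e3).
- apply: (caseB gen two0 (k := e./2)).
  + by rewrite -expnD addnn qe -/e -{1}(odd_double_half e) oe.
  + have := odd_double_half e; rewrite oe; lia.
Qed.
Local Close Scope ring_scope.
Unset Implicit Arguments.

Theorem corollary4p2 (q : nat) (F : finFieldType) :
  #|F| = q -> (5 < q)%N -> (forall p : nat, prime p -> q <> 2 ^ p) ->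
  forall w : {unit F}, <[w]>%g = [set: {unit F}] ->
  exists s : {perm {unit F}},
    [/\ s \in Gq F, (forall c : {unit F}, s c = (w * c)%g) &
        forall c : {unit F}, #|porbit s c| = q.-1].
Proof.
move=> qF q5 np2 w gen.
rewrite -qF; apply: final => //; apply: main_P => //; rewrite qF //.
Qed.
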